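(* If $n>3$, then $R(U_n)$ is dense in $\mathbb{C}$.
   Context: Let $\mathbf{T}=\{z\in\mathbb{C}:|z|=1\}$. An angle is an element of the quotient group $\mathbf{T}/\{\pm1\}$; in formulas an angle is represented by either of its two representatives $u\in\mathbf{T}$. For $p\in\mathbb{C}$ and an angle $u$, let $L_u(p)=\{p+ru: r\in\mathbb{R}\}$. For distinct angles $u,v$ and $p,q\in\mathbb{C}$, $I_{u,v}(p,q)$ denotes the unique point of $L_u(p)\cap L_v(q)$. For a subgroup $U$ of $\mathbf{T}/\{\pm1\}$, $R(U)$ denotes the smallest subset of $\mathbb{C}$ that contains $0$ and $1$ and such that $I_{u,v}(p,q)\in R(U)$ whenever $p,q\in R(U)$ and $u,v$ are distinct elements of $U$. For $n\ge 3$, $U_n$ denotes the cyclic subgroup of $\mathbf{T}/\{\pm1\}$ of order $n$ generated by the class of $e^{i\pi/n}$. *)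

(* Defs.v *)
From Stdlib Require Import Reals ZArith.
Open Scope R_scope.

Definition C : Type := (R * R)%type.
Definition Cadd (z w : C) : C := (fst z + fst w, snd z + snd w).
Definition Copp (z : C) : C := (- fst z, - snd z).
Definition Cscal (r : R) (z : C) : C := (r * fst z, r * snd z).
Definition C0 : C := (0, 0).
Definition C1 : C := (1, 0).

Definition cexpi (t : R) : C := (cos t, sin t).

(* u : T represents an element of the subgroup U_n of T/{+-1} generated by
   the class of e^{i pi/n}: u = e^{i k pi / n} for some integer k
   (this includes both representatives, since e^{i (k+n) pi/n} = - e^{i k pi/n}). *)
Definition in_Un (n : nat) (u : C) : Prop :=
  exists k : Z, u = cexpi (IZR k * PI / INR n).

(* equality of angles (classes in T/{+-1}) *)
Definition same_angle (u v : C) : Prop := u = v \/ u = Copp v.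

Definition on_line (u p z : C) : Prop := exists r : R, z = Cadd p (Cscal r u).

(* R(U_n): smallest set containing 0 and 1 and closed under taking the
   intersection point I_{u,v}(p,q) of L_u(p) and L_v(q) for distinct angles
   u, v in U_n.  (For distinct angles the intersection is a single point.) *)
Inductive RU (n : nat) : C -> Prop :=
| RU0 : RU n C0
| RU1 : RU n C1
| RUI : forall (p q u v z : C),
    RU n p -> RU n q -> in_Un n u -> in_Un n v -> ~ same_angle u v ->
    on_line u p z -> on_line v q z -> RU n z.

Definition Cdist2 (z w : C) : R := (fst z - fst w)^2 + (snd z - snd w)^2.

Definition dense_in_C (S : C -> Prop) : Prop :=
  forall (z : C) (eps : R), 0 < eps -> exists w : C, S w /\ Cdist2 z w < eps ^ 2.

(* Main.v *)
Require Import Defs.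
From Stdlib Require Import Reals ZArith Lra Lia Psatz.
Open Scope R_scope.

Definition cross (u v : Defs.C) := fst u * snd v - snd u * fst v.

Lemma step n p q u v z : RU n p -> RU n q -> in_Un n u -> in_Un n v ->
  cross u v <> 0 -> on_line u p z -> on_line v q z -> RU n z.
Proof.
  intros Hp Hq Hu Hv Hc H1 H2. apply (RUI n p q u v z); auto.
  destruct u as [u1 u2], v as [v1 v2]; unfold cross, Copp in *; simpl in *.
  intros [E|E]; apply Hc; simpl in E; apply pair_equal_spec in E; destruct E as [E1 E2]; subst; simpl; ring.
Qed.

Lemma peq (a b c d : R) : a = c -> b = d -> (a, b) = (c, d).
Proof. intros; subst; auto. Qed.

Lemma RU0' n : RU n (0,0). Proof. exact (RU0 n). Qed.

Section G.
Variables (n : nat) (a b c d : R).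
Hypotheses (Hu : in_Un n (a,b)) (Hv : in_Un n (c,d)) (He : in_Un n (1,0))
  (Hb : b <> 0) (Hd : d <> 0) (HD : a*d - b*c <> 0).

Lemma apex x : RU n (x,0) -> RU n (x*d/(a*d-b*c)*a, x*d/(a*d-b*c)*b).
Proof.
  intros Hx. apply step with (p:=(0,0)) (q:=(x,0)) (u:=(a,b)) (v:=(c,d)); auto.
  apply RU0'. unfold cross; simpl; auto.
  exists (x*d/(a*d-b*c)). unfold Cadd, Cscal; simpl; apply peq; field; auto.
  exists (x*b/(a*d-b*c)). unfold Cadd, Cscal; simpl; apply peq; field; auto.
Qed.

Lemma sub_closed x y : RU n (x,0) -> RU n (y,0) -> RU n (x-y,0).
Proof.
  intros Hx Hy. set (D := a*d-b*c). set (r := (x-y)*d/D). set (s := (x-y)*b/D).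
  assert (HP : RU n (y + r*a, r*b)).
  { apply step with (p:=(y,0)) (q:=(x,0)) (u:=(a,b)) (v:=(c,d)); auto.
    exists r. unfold Cadd, Cscal; simpl; apply peq; ring.
    exists s. unfold Cadd, Cscal, r, s, D; simpl; apply peq; field; auto. }
  assert (HQ : RU n (r*a, r*b)).
  { apply step with (p:=(0,0)) (q:=(y + r*a, r*b)) (u:=(a,b)) (v:=(1,0)); auto.
    apply RU0'. unfold cross; simpl. intro; apply Hb; lra.
    exists r. unfold Cadd, Cscal; simpl; apply peq; ring.
    exists (-y). unfold Cadd, Cscal; simpl; apply peq; ring. }
  apply step with (p:=(r*a, r*b)) (q:=(0,0)) (u:=(c,d)) (v:=(1,0)); auto.
  apply RU0'. unfold cross; simpl. intro; apply Hd; lra.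
  exists (-s). unfold Cadd, Cscal, r, s, D; simpl; apply peq; field; auto.
  exists (x-y). unfold Cadd, Cscal; simpl; apply peq; ring.
Qed.

Lemma combo x y : RU n (x,0) -> RU n (y,0) ->
  RU n (x + y*d/(a*d-b*c)*a, y*d/(a*d-b*c)*b).
Proof.
  intros Hx Hy. pose proof (apex y Hy) as HA.
  apply step with (p:=(x,0)) (q:=(y*d/(a*d-b*c)*a, y*d/(a*d-b*c)*b)) (u:=(a,b)) (v:=(1,0)); auto.
  unfold cross; simpl. intro; apply Hb; lra.
  exists (y*d/(a*d-b*c)). unfold Cadd, Cscal; simpl; apply peq; ring.
  exists x. unfold Cadd, Cscal; simpl; apply peq; ring.
Qed.

Variables (e f : R).
Hypotheses (Hw : in_Un n (e,f)) (Hf : f <> 0).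
Lemma scale x : RU n (x,0) -> RU n (x * (d*(a*f-b*e)/((a*d-b*c)*f)), 0).
Proof.
  intros Hx. pose proof (apex x Hx) as HA.
  apply step with (p:=(x*d/(a*d-b*c)*a, x*d/(a*d-b*c)*b)) (q:=(0,0)) (u:=(e,f)) (v:=(1,0)); auto.
  apply RU0'. unfold cross; simpl. intro; apply Hf; lra.
  exists (- (x*d/(a*d-b*c)*b)/f). unfold Cadd, Cscal; simpl; apply peq; field; auto.
  exists (x * (d*(a*f-b*e)/((a*d-b*c)*f))). unfold Cadd, Cscal; simpl; apply peq; ring.
Qed.
End G.

Section Dense1.
Variable Sx : R -> Prop.
Variable c : R.
Hypotheses (S0 : Sx 0) (S1 : Sx 1) (Ssub : forall x y, Sx x -> Sx y -> Sx (x - y))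
  (Sc : forall x, Sx x -> Sx (x * c)) (c0 : 0 < c) (c1 : c < 1).

Lemma S_pow m : Sx (c ^ m).
Proof. induction m; simpl; auto. rewrite Rmult_comm; auto. Qed.

Lemma S_nat h k : Sx h -> Sx (INR k * h).
Proof.
  intros Hh; induction k.
  - simpl; rewrite Rmult_0_l; auto.
  - replace (INR (S k) * h) with (INR k * h - (0 - h)) by (rewrite S_INR; ring).
    auto.
Qed.

Lemma S_int h z : Sx h -> Sx (IZR z * h).
Proof.
  intros Hh. destruct (Z.le_ge_cases 0 z) as [Hz|Hz].
  - destruct (IZN z Hz) as [k ->]. rewrite <- INR_IZR_INZ. apply S_nat; auto.
  - assert (Hz' : (0 <= - z)%Z) by lia. destruct (IZN _ Hz') as [k Hk].
    replace (IZR z * h) with (0 - INR k * h).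
    + apply Ssub; auto. apply S_nat; auto.
    + rewrite INR_IZR_INZ, <- Hk, opp_IZR. ring.
Qed.

Lemma S_dense t eps : 0 < eps -> exists x, Sx x /\ Rabs (t - x) < eps.
Proof.
  intros He. assert (Hc : Rabs c < 1) by (rewrite Rabs_right; lra).
  destruct (pow_lt_1_zero c Hc eps He) as [N HN].
  specialize (HN N (le_n N)). set (h := c ^ N) in *.
  assert (hpos : 0 < h) by (apply pow_lt; auto).
  rewrite Rabs_right in HN by lra.
  exists (IZR (up (t / h) - 1) * h). split.
  - apply S_int, S_pow.
  - destruct (archimed (t / h)) as [A1 A2]. rewrite minus_IZR.
    set (q := t / h) in *. assert (Ht : t = q * h) by (unfold q; field; lra).
    set (k := IZR (up q)) in *.
    apply Rabs_def1; nra.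
Qed.
End Dense1.

Definition th (n : nat) (k : Z) := IZR k * PI / INR n.

Lemma th_bounds n k : (3 < n)%nat -> (1 <= k <= 3)%Z -> 0 < th n k < PI.
Proof.
  intros Hn Hk. unfold th. apply lt_INR in Hn. replace (INR 3) with 3 in Hn by (simpl; ring).
  assert (1 <= IZR k <= 3) by (split; apply IZR_le; lia).
  pose proof PI_RGT_0.
  split.
  - apply Rdiv_lt_0_compat; nra.
  - apply Rmult_lt_reg_r with (INR n); [lra|]. unfold Rdiv. rewrite Rmult_assoc, Rinv_l by lra. nra.
Qed.

Lemma in_th n k : in_Un n (cos (th n k), sin (th n k)).
Proof. exists k; reflexivity. Qed.

Lemma in_e0 n : in_Un n (1, 0).
Proof. exists 0%Z. unfold cexpi. replace (IZR 0 * PI / INR n) with 0 by (simpl; unfold Rdiv; ring).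
  rewrite cos_0, sin_0; reflexivity. Qed.

Theorem mainTheorem11 (n : nat) (hn : (3 < n)%nat) : dense_in_C (RU n).
Proof.
  assert (INR n <> 0) by (apply not_0_INR; lia).
  pose proof (th_bounds n 1 hn ltac:(lia)) as B1.
  pose proof (th_bounds n 2 hn ltac:(lia)) as B2.
  pose proof (th_bounds n 3 hn ltac:(lia)) as B3.
  assert (E21 : th n 2 - th n 1 = th n 1) by (unfold th; field; auto).
  assert (E31 : th n 3 - th n 1 = th n 2) by (unfold th; field; auto).
  assert (E321 : th n 3 = th n 2 + th n 1) by (unfold th; field; auto).
  pose proof (sin_gt_0 _ (proj1 B1) (proj2 B1)) as s1p.
  pose proof (sin_gt_0 _ (proj1 B2) (proj2 B2)) as s2p.
  pose proof (sin_gt_0 _ (proj1 B3) (proj2 B3)) as s3p.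
  assert (D12 : cos (th n 1) * sin (th n 2) - sin (th n 1) * cos (th n 2) = sin (th n 1)).
  { transitivity (sin (th n 2 - th n 1)); [rewrite sin_minus; ring | now rewrite E21]. }
  assert (D13 : cos (th n 1) * sin (th n 3) - sin (th n 1) * cos (th n 3) = sin (th n 2)).
  { transitivity (sin (th n 3 - th n 1)); [rewrite sin_minus; ring | now rewrite E31]. }
  assert (P31 : sin (th n 3) * sin (th n 1) = sin (th n 2) ^ 2 - sin (th n 1) ^ 2).
  { assert (H0 : sin (th n 2 + th n 1) * sin (th n 2 - th n 1) = sin (th n 2) ^ 2 - sin (th n 1) ^ 2).
    { rewrite sin_plus, sin_minus.
      pose proof (sin2_cos2 (th n 1)). pose proof (sin2_cos2 (th n 2)).
      unfold Rsqr in *. nra. }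
    rewrite E21, <- E321 in H0. exact H0. }
  set (Sx := fun x => RU n (x, 0)).
  set (cc := sin (th n 3) * (cos (th n 1) * sin (th n 2) - sin (th n 1) * cos (th n 2)) /
     ((cos (th n 1) * sin (th n 3) - sin (th n 1) * cos (th n 3)) * sin (th n 2))).
  assert (Hcc : cc = sin (th n 3) * sin (th n 1) / (sin (th n 2) * sin (th n 2))).
  { unfold cc. rewrite D12, D13. reflexivity. }
  assert (Hsub : forall x y, Sx x -> Sx y -> Sx (x - y)).
  { intros x y. apply (sub_closed n (cos (th n 1)) (sin (th n 1)) (cos (th n 2)) (sin (th n 2)));
     try apply in_th; try apply in_e0; try lra. }
  assert (Hsc : forall x, Sx x -> Sx (x * cc)).
  { intros x. apply (scale n (cos (th n 1)) (sin (th n 1)) (cos (th n 3)) (sin (th n 3)));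
     try apply in_th; try apply in_e0; try lra. }
  assert (c0 : 0 < cc).
  { rewrite Hcc. apply Rdiv_lt_0_compat; nra. }
  assert (c1 : cc < 1).
  { rewrite Hcc, P31. apply Rmult_lt_reg_r with (sin (th n 2) * sin (th n 2)); [nra|].
    unfold Rdiv. rewrite Rmult_assoc, Rinv_l by nra. nra. }
  assert (SD := S_dense Sx cc (RU0' n) (RU1 n) Hsub Hsc c0 c1).
  intros [z1 z2] eps He.
  set (a := cos (th n 1)). set (b := sin (th n 1)). set (s2 := sin (th n 2)).
  destruct (SD (z2 / s2) (eps / (2 * s2))) as [y [Hy Hyd]].
  { apply Rdiv_lt_0_compat. lra. unfold s2; lra. }
  destruct (SD (z1 - y * s2 / b * a) (eps / 2)) as [x [Hx Hxd]]. lra.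
  exists (x + y * s2 / (a * s2 - b * cos (th n 2)) * a, y * s2 / (a * s2 - b * cos (th n 2)) * b).
  split.
  - apply (combo n a b (cos (th n 2)) s2); try apply in_th; try apply in_e0; auto.
    all: unfold a, b, s2 in *; rewrite ?D12; try lra; auto.
  - unfold Cdist2; simpl. unfold a, b, s2 in *. rewrite D12.
    apply Rabs_def2 in Hyd. apply Rabs_def2 in Hxd.
    set (p := z1 - y * sin (th n 2) / sin (th n 1) * cos (th n 1) - x) in *.
    set (q := z2 / sin (th n 2) - y) in *.
    replace (z1 - (x + y * sin (th n 2) / sin (th n 1) * cos (th n 1))) with p by (unfold p; ring).
    replace (z2 - y * sin (th n 2) / sin (th n 1) * sin (th n 1)) with (sin (th n 2) * q)
      by (unfold q; field; lra).
    assert (Q : - (eps/2) < sin (th n 2) * q < eps / 2).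
    { replace (eps/2) with (sin (th n 2) * (eps / (2 * sin (th n 2)))) by (field; lra).
      split; nra. }
    nra.
Qed.
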